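(* Let $m\in\mathbb{N}_{>0}$, $(\theta_1,\dots,\theta_m)\in\mathbb{R}_{>0}^m$ and $(q_1,\dots,q_m)\in(0,1)^m$. Let $\{Y_j\}_{j\in\mathbb{N}}$ (with $\mathbb{N}=\{0,1,2,\dots\}$) be independent random variables with values in $\{0,1,\dots,m\}$ such that \[ \mathbb{P}(Y_j=0)=\frac{1}{1+\sum_{\ell=1}^m\theta_\ell q_\ell^j},\qquad \mathbb{P}(Y_j=k)=\frac{\theta_k q_k^j}{1+\sum_{\ell=1}^m\theta_\ell q_\ell^j},\quad k=1,\dots,m, \] and define $X_k:=\sum_{j=0}^{\infty}\mathbf{1}(Y_j=k)$ for $k=1,\dots,m$. Then $(X_1,\dots,X_m)\overset{d}{\sim}\mathrm{He}(\theta_1,\dots,\theta_m;q_1,\dots,q_m)$.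
   Context: Multi-dimensional Heine distribution: for $(\theta_1,\dots,\theta_m)\in\mathbb{R}_{>0}^m$ and $(q_1,\dots,q_m)\in(0,1)^m$, an $\mathbb{N}^m$-valued random variable $(X_1,\dots,X_m)$ has distribution $\mathrm{He}(\theta_1,\dots,\theta_m;q_1,\dots,q_m)$ if for all $(\alpha_1,\dots,\alpha_m)\in\mathbb{N}^m$, \[ \mathbb{P}(X_1=\alpha_1,\dots,X_m=\alpha_m)=\frac{\theta_1^{\alpha_1}\cdots\theta_m^{\alpha_m}\sum_{J_1,\dots,J_m}\prod_{k=1}^m q_k^{\sum_{j\in J_k}j}}{\prod_{j=0}^{\infty}\bigl(1+\sum_{k=1}^m\theta_k q_k^j\bigr)}, \] where the sum runs over all tuples of pairwise disjoint subsets $J_1,\dots,J_m\subseteq\mathbb{N}$ with $|J_k|=\alpha_k$ for each $k$. *)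

(* Defs.v *)
From HB Require Import structures.
From mathcomp Require Import all_boot all_order all_algebra finmap.
From mathcomp Require Import all_classical all_reals all_analysis.
Set Implicit Arguments. Unset Strict Implicit. Unset Printing Implicit Defensive.
Import Order.TTheory GRing.Theory Num.Theory numFieldNormedType.Exports.
Local Open Scope classical_set_scope.
Local Open Scope ring_scope.

Definition mutually_independent_nat {d} {T : measurableType d} {R : realType}
  (P : probability T R) (Y : nat -> T -> nat) : Prop :=
  forall (s : {fset nat}) (B : nat -> set nat),
    P (\bigcap_(j in [set` s]) (Y j @^-1` B j)) =
    (\prod_(j <- s) P (Y j @^-1` B j))%E.

(* X_k := sum_{j>=0} 1(Y_j = k), with k : 'I_m standing for the value k+1;
   valued in the extended reals (a priori possibly +oo). *)
Definition Xcount {T : Type} {R : realType} {m : nat}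
  (Y : nat -> T -> nat) (k : 'I_m) (w : T) : \bar R :=
  (\sum_(0 <= j <oo) ((Y j w == k.+1)%:R : R)%:E)%E.

Definition heine_Z {R : realType} {m : nat} (theta q : 'I_m -> R) : R :=
  limn (fun n => \prod_(j < n) (1 + \sum_(k < m) theta k * q k ^+ j)).

Definition heine_tuples {m : nat} (alpha : 'I_m -> nat) :
  set ('I_m -> {fset nat}) :=
  [set J | (forall k, #|` J k| = alpha k) /\
           (forall k l, k != l -> forall x, x \in J k -> x \notin J l)].

(* P(X = alpha) for X ~ He(theta; q) *)
Definition heine_pmf {R : realType} {m : nat} (theta q : 'I_m -> R)
  (alpha : 'I_m -> nat) : \bar R :=
  ((\prod_(k < m) theta k ^+ alpha k)%:E *
   (\esum_(J in heine_tuples alpha)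
       (\prod_(k < m) q k ^+ (\sum_(j <- J k) j)%N)%:E) *
   (heine_Z theta q)^-1%:E)%E.

(* Main.v *)
Require Import Defs.
From HB Require Import structures.
From mathcomp Require Import all_boot all_order all_algebra finmap.
From mathcomp Require Import all_classical all_reals all_analysis.
Import Order.TTheory GRing.Theory Num.Theory numFieldNormedType.Exports.
Local Open Scope classical_set_scope.
Local Open Scope ring_scope.

Definition pS {R : realType} {m : nat} (theta q : 'I_m -> R) (j : nat) : R :=
  1 + \sum_(l < m) theta l * q l ^+ j.
Definition num {R : realType} {m : nat} (theta q : 'I_m -> R) (j v : nat) : R :=
  \prod_(k < m) (if v == k.+1 then theta k * q k ^+ j else 1).
Definition ext {m N : nat} (c : {ffun 'I_N -> 'I_m.+1}) (j : nat) : nat :=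
  if insub j is Some i then nat_of_ord (c i) else 0%N.
Definition good {m N : nat} (alpha : 'I_m -> nat) (c : {ffun 'I_N -> 'I_m.+1}) : bool :=
  [forall k : 'I_m, count (fun j => ext c j == k.+1) (iota 0 N) == alpha k].
Definition phi {m N : nat} (c : {ffun 'I_N -> 'I_m.+1}) : 'I_m -> {fset nat} :=
  fun k => seq_fset tt [seq j <- iota 0 N | ext c j == k.+1].
Definition Fq {R : realType} {m : nat} (q : 'I_m -> R) (J : 'I_m -> {fset nat}) : R :=
  \prod_(k < m) q k ^+ (\sum_(j <- J k) j)%N.
Definition W {R : realType} {m : nat} (q : 'I_m -> R) (N : nat) (alpha : 'I_m -> nat) : R :=
  \sum_(c : {ffun 'I_N -> 'I_m.+1} | good alpha c) Fq q (phi c).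
Definition Hev {T : Type} {m N : nat} (Y : nat -> T -> nat) (c : {ffun 'I_N -> 'I_m.+1}) : set T :=
  [set w | forall j, Y j w = ext c j].


Lemma pS_ge1 (R : realType) (m : nat) (theta q : 'I_m -> R) j :
  (forall k, 0 < theta k) -> (forall k, 0 < q k < 1) -> 1 <= pS theta q j.
Proof.
move=> th0 q01; rewrite /pS lerDl; apply: sumr_ge0 => k _.
by apply: mulr_ge0; [exact: ltW | apply: exprn_ge0; case/andP: (q01 k) => /ltW].
Qed.

Arguments pS_ge1 {R m theta q} j.

Lemma geom_le (R : realType) (x : R) n : 0 <= x < 1 -> \sum_(i < n) x ^+ i <= (1 - x)^-1.
Proof.
case/andP => x0 x1.
have hx : 0 < 1 - x by rewrite subr_gt0.
have E : \sum_(i < n) x ^+ i = (1 - x ^+ n) / (1 - x).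
  apply: (@mulIf _ (1 - x)); first by rewrite gt_eqF.
  rewrite divfK ?gt_eqF //.
  have := subrX1 x n; rewrite mulrC => h.
  by rewrite -[1 - x]opprB mulrN -h opprB.
rewrite E ler_pdivrMr // mulVf ?gt_eqF // lerBlDr lerDl.
exact: exprn_ge0.
Qed.

Lemma Z_cvg (R : realType) (m : nat) (theta q : 'I_m -> R) :
  (forall k, 0 < theta k) -> (forall k, 0 < q k < 1) ->
  (fun K => \prod_(j < K) pS theta q j) @ \oo --> heine_Z theta q /\ 1 <= heine_Z theta q.
Proof.
move=> th0 q01.
pose u := fun K => \prod_(j < K) pS theta q j.
have u0 K : 0 <= u K by apply: prodr_ge0 => j _; exact: le_trans ler01 (pS_ge1 _ th0 q01).
have und : {homo u : n m / (n <= m)%N >-> n <= m}.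
  apply/nondecreasing_seqP => n; rewrite /u big_ord_recr /=.
  by rewrite ler_peMr //; [exact: u0 | exact: (pS_ge1 _ th0 q01)].
pose B := \sum_(k < m) theta k * (1 - q k)^-1.
have ub : has_ubound (range u).
  exists (expR B) => _ [K _ <-].
  apply: (@le_trans _ _ (\prod_(j < K) expR (\sum_(l < m) theta l * q l ^+ j))).
    apply: ler_prod => j _; apply/andP; split; first exact: le_trans ler01 (pS_ge1 _ th0 q01).
    exact: expR_ge1Dx.
  rewrite -expR_sum ler_expR exchange_big /=; apply: ler_sum => k _.
  rewrite -mulr_sumr ler_wpM2l //; first exact: ltW.
  apply: geom_le; case/andP: (q01 k) => /ltW -> -> //.
have cu := nondecreasing_is_cvgn und ub.
split; first exact: cu.
have := nondecreasing_cvgn_le und cu 0.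
by rewrite /u big_ord0.
Qed.

Lemma ext_ge {m N : nat} (c : {ffun 'I_N -> 'I_m.+1}) j : (N <= j)%N -> ext c j = 0%N.
Proof. by move=> h; rewrite /ext insubF // ltnNge h. Qed.

Lemma extm {m N : nat} (c : {ffun 'I_N -> 'I_m.+1}) j : (ext c j <= m)%N.
Proof. by rewrite /ext; case: insub => [i|//]; rewrite -ltnS. Qed.

Lemma mem_phi {m N : nat} (c : {ffun 'I_N -> 'I_m.+1}) k x :
  (x \in phi c k) = (ext c x == k.+1).
Proof.
rewrite /phi seq_fsetE mem_filter mem_iota add0n /=.
case: (ltnP x N) => h; first by rewrite andbT.
by rewrite andbF ext_ge.
Qed.

Lemma phi_inj m N (c c' : {ffun 'I_N -> 'I_m.+1}) : phi c = phi c' -> c = c'.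
Proof.
move=> e; apply/ffunP => i; apply: ord_inj.
have hk (k : 'I_m) : (ext c i == k.+1) = (ext c' i == k.+1) by rewrite -(mem_phi c) -(mem_phi c') e.
have hc := extm c i; have hc' := extm c' i.
have eq : ext c i = ext c' i.
  case E: (ext c i) hc => [|v] hv; case E': (ext c' i) hc' => [|v'] hv' //.
  - by have := hk (Ordinal hv'); rewrite E E' eqxx.
  - by have := hk (Ordinal hv); rewrite E E' eqxx.
  - by have := hk (Ordinal hv); rewrite E E' eqxx /= => /esym/eqP [->].
by move: eq; rewrite /ext valK.
Qed.

Definition TN {m : nat} (alpha : 'I_m -> nat) (N : nat) : set ('I_m -> {fset nat}) :=
  heine_tuples alpha `&` [set J | forall k x, x \in J k -> (x < N)%N].

Lemma phi_TN m N (alpha : 'I_m -> nat) :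
  phi @` [set` (good alpha : {pred {ffun 'I_N -> 'I_m.+1}})] = TN alpha N.
Proof.
apply/seteqP; split => [_ [c /= gc <-]|J [[cJ dJ] bJ]].
  have gc' : good alpha c by [].
  move/forallP: gc' => gc'.
  split; [split|].
  - move=> k; rewrite /phi size_seq_fset undup_id ?filter_uniq ?iota_uniq //.
    by rewrite size_filter; apply/eqP; exact: gc'.
  - move=> k l kl x; rewrite !mem_phi => /eqP ->; rewrite eqSS.
    by apply: contra kl => /eqP /val_inj ->.
  - by move=> k x; rewrite mem_phi; apply: contraTT; rewrite -leqNgt => /ext_ge ->.
pose c : {ffun 'I_N -> 'I_m.+1} :=
  [ffun i : 'I_N => if [pick k | val i \in J k] is Some k then inord k.+1 else ord0].
have bJ' : forall k x, x \in J k -> (x < N)%N := bJ.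
have ecJ (k : 'I_m) x : (ext c x == k.+1) = (x \in J k).
  case: (ltnP x N) => h; last first.
    rewrite ext_ge //; apply/esym/negP => /bJ'; rewrite ltnNge h.
    done.
  rewrite /ext; case: insubP => [i _ iv|]; last by rewrite h.
  rewrite ffunE; case: pickP => [k0 /= xk0|/= nk].
    rewrite inordK; last by rewrite ltnS.
    rewrite eqSS; apply/idP/idP => [/eqP/val_inj <-|xk]; first by rewrite -iv.
    apply/eqP; congr nat_of_ord; apply: contraTeq xk => k0k.
    by apply: (dJ k0 k _ x); rewrite // -iv.
  by apply/esym/negP; rewrite -iv => xk; have := nk k; rewrite xk.
have pc : phi c = J.
  by apply/funext => k; apply/fsetP => x; rewrite mem_phi ecJ.
exists c => //=; apply/forallP => k; apply/eqP.
rewrite -cJ -pc /phi size_seq_fset undup_id ?filter_uniq ?iota_uniq //.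
by rewrite size_filter.
Qed.

Lemma Fq_ge0 (R : realType) m (q : 'I_m -> R) J : (forall k, 0 < q k < 1) -> 0 <= Fq q J.
Proof.
move=> q01; apply: prodr_ge0 => k _; apply: exprn_ge0.
by case/andP: (q01 k) => /ltW.
Qed.

Lemma TN_fin m (alpha : 'I_m -> nat) N : finite_set (TN alpha N).
Proof. rewrite -(phi_TN m N alpha); apply: finite_image; exact: finite_finset. Qed.

Lemma WE (R : realType) m (q : 'I_m -> R) (alpha : 'I_m -> nat) N :
  W q N alpha = (\sum_(J \in TN alpha N) Fq q J)%R.
Proof.
rewrite -(phi_TN m N alpha) fsbig_image; last by move=> c c' _ _; exact: phi_inj.
rewrite /W (@bigfs _ _ _ _ (index_enum _)) //; first exact: index_enum_uniq.
by move=> i _; rewrite mem_index_enum.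
Qed.

Lemma W_cvg (R : realType) (m : nat) (q : 'I_m -> R) (alpha : 'I_m -> nat) :
  (forall k, 0 < q k < 1) ->
  (fun N => (W q N alpha)%:E) @ \oo -->
  (\esum_(J in heine_tuples alpha) (Fq q J)%:E)%E.
Proof.
move=> q01.
have Fq0 J : (0 <= (Fq q J)%:E)%E by rewrite lee_fin Fq_ge0.
have WE' N : (W q N alpha)%:E = (\sum_(J \in TN alpha N) (Fq q J)%:E)%E.
  by rewrite WE fsumEFin //; exact: TN_fin.
have mono : {homo (fun N => (W q N alpha)%:E) : n n' / (n <= n')%N >-> (n <= n')%E}.
  move=> n n' nn'; rewrite !WE'; apply: lee_fsum_nneg_subset.
  - exact: TN_fin.
  - exact: TN_fin.
  - apply/subsetP => J [hJ bJ]; split => // k x /bJ xn; exact: leq_trans xn nn'.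
  - by move=> *; exact: Fq0.
set S := esum _ _.
suff -> : S = ereal_sup (range (fun N => (W q N alpha)%:E)) by exact: ereal_nondecreasing_cvgn mono.
apply/le_anti/andP; split.
- apply: ge_ereal_sup => _ [A [finA sA] <-].
  have [X AX] := finite_fsetP.1 finA.
  pose N := (\max_(J <- X) \max_k \max_(x <- J k) x)%N.+1.
  have sub : A `<=` TN alpha N.
    move=> J AJ; split; first exact: sA.
    move=> k x xJ.
    have JX : J \in X by move: AJ; rewrite AX.
    rewrite /N ltnS.
    apply: leq_trans _ (@leq_bigmax_seq _ (enum_fset X) xpredT (fun J => \max_k \max_(x <- J k) x)%N J JX isT).
    apply: leq_trans _ (@leq_bigmax _ (fun k => \max_(x <- J k) x)%N k).
    exact: (@leq_bigmax_seq _ (enum_fset (J k)) xpredT id x xJ isT).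
  apply: (@le_trans _ _ (W q N alpha)%:E); last by apply: ereal_sup_ubound; exists N.
  rewrite WE'; apply: lee_fsum_nneg_subset.
  - exact: finA.
  - exact: TN_fin.
  - exact/subsetP.
  - by move=> *; exact: Fq0.
- apply: ge_ereal_sup => _ [N _ <-]; rewrite WE'; apply: ereal_sup_ubound.
  by exists (TN alpha N) => //; split; [exact: TN_fin | move=> J []].
Qed.

Lemma sum_phi m N (c : {ffun 'I_N -> 'I_m.+1}) (k : 'I_m) :
  (\sum_(j <- phi c k) j = \sum_(0 <= j < N | ext c j == k.+1) j)%N.
Proof.
rewrite /phi (perm_big _ (seq_fset_perm _ _)) undup_id ?filter_uniq ?iota_uniq //.
by rewrite big_filter /index_iota subn0.
Qed.

Lemma sumnum (R : realType) (m : nat) (theta q : 'I_m -> R) (alpha : 'I_m -> nat) N :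
  \sum_(c : {ffun 'I_N -> 'I_m.+1} | good alpha c) \prod_(j < N) num theta q j (ext c j) =
  (\prod_(k < m) theta k ^+ alpha k) * W q N alpha.
Proof.
rewrite /W mulr_sumr; apply: eq_bigr => c /forallP gc.
rewrite /Fq -big_split /= /num exchange_big /=; apply: eq_bigr => k _.
rewrite -big_mkcond /=.
rewrite -(big_mkord (fun j => ext c j == k.+1) (fun j => theta k * q k ^+ j)).
rewrite big_split /= prodrXr sum_phi; congr (_ * _).
rewrite (_ : \prod_(0 <= i < N | ext c i == k.+1) theta k =
             \prod_(0 <= i < N | ext c i == k.+1) theta k ^+ 1%N); last first.
  by apply: eq_bigr => *; rewrite expr1.
rewrite prodrXr sum1_count; congr (_ ^+ _).
by apply/eqP; have := gc k; rewrite /index_iota subn0.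
Qed.

Lemma ext_ffun m N (g : nat -> nat) j : (forall i, g i <= m)%N ->
  ext ([ffun i : 'I_N => inord (g i)] : {ffun 'I_N -> 'I_m.+1}) j = if (j < N)%N then g j else 0%N.
Proof.
move=> gm; case: (ltnP j N) => h; last exact: ext_ge.
rewrite /ext; case: insubP => [i _ iv|]; last by rewrite h.
by rewrite ffunE iv inordK // ltnS.
Qed.

Lemma count_mono (P : pred nat) n n' : (n <= n')%N ->
  (count P (iota 0 n) <= count P (iota 0 n'))%N.
Proof.
by move=> h; rewrite -(subnKC h) iotaD count_cat leq_addr.
Qed.

Lemma event_zero (P : pred nat) A : (forall n, count P (iota 0 n) <= A)%N ->
  exists N, forall j, (N <= j)%N -> ~~ P j.
Proof.
move=> hA; apply: contrapT => hN.
have step : forall N, exists2 j, (N <= j)%N & P j.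
  move=> N; apply: contrapT => h; apply: hN; exists N => j Nj; apply/negP => Pj.
  by apply: h; exists j.
have : forall i, exists n, (i <= count P (iota 0 n))%N.
  elim=> [|i [n hn]]; first by exists 0%N.
  have [j nj Pj] := step n; exists j.+1.
  rewrite -[j.+1]addn1 iotaD count_cat /= add0n Pj addn0 addn1 ltnS.
  exact: leq_trans hn (count_mono P _ _ nj).
move=> /(_ A.+1) [n hn]; have := hA n; rewrite leqNgt; move/negP; apply.
exact: hn.
Qed.

Lemma sum_ind_count (R : realType) (b : nat -> bool) N :
  (\sum_(0 <= j < N) ((b j)%:R : R)%:E)%E = ((count b (iota 0 N))%:R : R)%:E.
Proof.
rewrite sumEFin -natr_sum -sum1_count /index_iota subn0 /=.
congr (_%:R%:E); rewrite [RHS]big_mkcond; apply: eq_bigr => j _; by case: (b j).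
Qed.

Lemma XcountE (R : realType) (T : Type) (m : nat) (Y : nat -> T -> nat) (k : 'I_m) w N :
  (forall j, (N <= j)%N -> Y j w = 0%N) ->
  Xcount (R:=R) Y k w = ((count (fun j => Y j w == k.+1) (iota 0 N))%:R : R)%:E.
Proof.
move=> hz; rewrite /Xcount (nneseries_split _ N); last by move=> j _; rewrite lee_fin.
rewrite add0n eseries0 ?adde0; first exact: sum_ind_count.
by move=> j Nj _; rewrite hz.
Qed.

Lemma Xcount_ge (R : realType) (T : Type) (m : nat) (Y : nat -> T -> nat) (k : 'I_m) w n :
  (((count (fun j => Y j w == k.+1) (iota 0 n))%:R : R)%:E <= Xcount (R:=R) Y k w)%E.
Proof.
rewrite -sum_ind_count /Xcount; apply: nneseries_lim_ge => j _ _.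
by rewrite lee_fin.
Qed.

Lemma E_eq (R : realType) (T : Type) (m : nat) (Y : nat -> T -> nat) (alpha : 'I_m -> nat) :
  (forall j w, (Y j w <= m)%N) ->
  [set w | forall k, Xcount (R:=R) Y k w = ((alpha k)%:R : R)%:E] =
  \bigcup_N ([set w | forall k, Xcount (R:=R) Y k w = ((alpha k)%:R : R)%:E] `&`
    [set w | forall j, (N <= j)%N -> Y j w = 0%N]).
Proof.
move=> Ym; apply/seteqP; split => [w /= Ew|w [N _ []//]].
have hk : forall k : 'I_m, exists Nk : nat, forall j, (Nk <= j)%N -> Y j w != k.+1.
  move=> k; apply: (event_zero _ (alpha k)) => n.
  by have := @Xcount_ge R _ _ Y k w n; rewrite Ew lee_fin ler_nat.
have [Nk hNk] := fin_all_exists hk.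
exists (\max_k Nk k)%N => //; split => // j hj.
case E: (Y j w) => [//|v].
have vm : (v < m)%N by rewrite -ltnS -E ltnS Ym.
suff : Y j w != (Ordinal vm).+1 by rewrite E eqxx.
apply: hNk; apply: leq_trans hj; exact: leq_bigmax.
Qed.

Lemma EN_eq (R : realType) (T : Type) (m : nat) (Y : nat -> T -> nat) (alpha : 'I_m -> nat) N :
  (forall j w, (Y j w <= m)%N) ->
  [set w | forall k, Xcount (R:=R) Y k w = ((alpha k)%:R : R)%:E] `&`
    [set w | forall j, (N <= j)%N -> Y j w = 0%N] =
  \bigcup_(c in [set c : {ffun 'I_N -> 'I_m.+1} | good alpha c]) Hev Y c.
Proof.
move=> Ym; apply/seteqP; split => w.
  move=> [/= Ew Zw].
  pose c : {ffun 'I_N -> 'I_m.+1} := [ffun i : 'I_N => inord (Y i w)].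
  have ec j : ext c j = Y j w.
    rewrite /c (@ext_ffun m N (fun n => Y n w)); last by move=> i; exact: Ym.
    by case: ltnP => // h; rewrite Zw.
  exists c; last by move=> j; rewrite ec.
  rewrite /= /good; apply/forallP => k; apply/eqP.
  have -> : count (fun j => ext c j == k.+1) (iota 0 N) =
            count (fun j => Y j w == k.+1) (iota 0 N) by apply: eq_count => j; rewrite ec.
  apply/eqP; rewrite -(eqr_nat R); apply/eqP; apply: EFin_inj.
  by rewrite -(Ew k) (@XcountE R T m Y k w N Zw).
move=> [c /= /forallP gc Hc]; split => /=; last first.
  by move=> j hj; rewrite Hc ext_ge.
have Zw : forall j, (N <= j)%N -> Y j w = 0%N by move=> j hj; rewrite Hc ext_ge.
move=> k; rewrite (@XcountE R T m Y k w N Zw); congr (_%:R%:E).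
have /eqP <- := gc k; apply: eq_count => j; by rewrite Hc.
Qed.

Lemma num0 (R : realType) (m : nat) (theta q : 'I_m -> R) j : num theta q j 0 = 1.
Proof. by rewrite /num big1. Qed.

Lemma numS (R : realType) (m : nat) (theta q : 'I_m -> R) j (k : 'I_m) :
  num theta q j k.+1 = theta k * q k ^+ j.
Proof.
rewrite /num (bigD1 k) //= eqxx big1 ?mulr1 // => i ik.
rewrite eqSS; case: eqP => // /val_inj ki.
by rewrite ki eqxx in ik.
Qed.

Lemma PY (R : realType) (d : measure_display) (T : measurableType d)
  (P : probability T R) (m : nat) (theta q : 'I_m -> R)
  (Y : nat -> T -> nat) :
  (forall j, P (Y j @^-1` [set 0%N]) =
     (1 / (1 + \sum_(l < m) theta l * q l ^+ j))%:E) ->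
  (forall j (k : 'I_m), P (Y j @^-1` [set k.+1]) =
     (theta k * q k ^+ j / (1 + \sum_(l < m) theta l * q l ^+ j))%:E) ->
  forall j v, (v <= m)%N -> P (Y j @^-1` [set v]) = (num theta q j v / pS theta q j)%:E.
Proof.
move=> Y0 Yk j [|v] vm; first by rewrite Y0 num0.
have vm' : (v < m)%N by [].
by rewrite (Yk j (Ordinal vm')) (@numS _ _ theta q j (Ordinal vm')).
Qed.

Lemma PH (R : realType) (d : measure_display) (T : measurableType d)
  (P : probability T R) (m : nat) (theta q : 'I_m -> R)
  (Y : nat -> T -> nat) :
  (forall k, 0 < theta k) ->
  (forall k, 0 < q k < 1) ->
  (forall j, measurable_fun setT (Y j)) ->
  (forall j w, (Y j w <= m)%N) ->
  mutually_independent_nat P Y ->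
  (forall j, P (Y j @^-1` [set 0%N]) =
     (1 / (1 + \sum_(l < m) theta l * q l ^+ j))%:E) ->
  (forall j (k : 'I_m), P (Y j @^-1` [set k.+1]) =
     (theta k * q k ^+ j / (1 + \sum_(l < m) theta l * q l ^+ j))%:E) ->
  forall N (c : {ffun 'I_N -> 'I_m.+1}),
  P (Hev Y c) = ((\prod_(j < N) num theta q j (ext c j)) / heine_Z theta q)%:E.
Proof.
move=> th0 q01 Ymeas Ym Yind Y0 Yk N c.
have [Zc Z1] := @Z_cvg _ _ _ _ th0 q01.
have Z0 : heine_Z theta q != 0 by rewrite gt_eqF // (lt_le_trans ltr01).
have extm j : (ext c j <= m)%N.
  by rewrite /ext; case: insub => [i|//]; rewrite -ltnS.
pose G K := [set w | forall j, (j < K)%N -> Y j w = ext c j].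
have mY j B : measurable (Y j @^-1` B).
  by rewrite -[X in measurable X]setTI; exact: Ymeas.
have PG K : P (G K) = (\prod_(j < K) (num theta q j (ext c j) / pS theta q j))%:E.
  have -> : G K = \bigcap_(j in [set` seq_fset tt (iota 0 K)]) (Y j @^-1` [set ext c j]).
    apply/seteqP; split => w.
      move=> H j js; have : j \in seq_fset tt (iota 0 K) := js.
      by rewrite seq_fsetE mem_iota add0n => /andP[_ /H].
    move=> H j jK; apply: (H j).
    by have : j \in seq_fset tt (iota 0 K) by rewrite seq_fsetE mem_iota add0n jK.
  rewrite Yind (perm_big _ (seq_fset_perm _ _)) undup_id ?iota_uniq //.
  rewrite (_ : iota 0 K = index_iota 0 K); last by rewrite /index_iota subn0.
  rewrite big_mkord -prodEFin.
  by apply: eq_bigr => j _; rewrite (@PY _ _ _ _ _ _ _ _ Y0 Yk).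
have Gm K : measurable (G K).
  have -> : G K = \bigcap_j (Y j @^-1` (if (j < K)%N then [set ext c j] else setT)).
    apply/seteqP; split => w /=.
      by move=> H j _; case: ifP => // /H.
    by move=> H j jK; have := H j I; rewrite jK.
  by apply: bigcapT_measurable => j; exact: mY.
have cvgG : (fun n => P (G (N + n)%N)) @ \oo --> P (Hev Y c).
  have -> : Hev Y c = \bigcap_n G (N + n)%N.
    apply/seteqP; split => w /=.
      by move=> H n _ j _; exact: H.
    move=> H j; apply: (H j.+1 I); by rewrite addnS ltnS leq_addl.
  apply: (nonincreasing_cvg_mu (F := fun n => G (N + n)%N)).
  - by rewrite (le_lt_trans (probability_le1 _ _)) ?ltey.
  - by move=> n; exact: Gm.
  - by apply: bigcapT_measurable => n; exact: Gm.
  - move=> n n' nn' ; apply/subsetPset => w H j jK; apply: H.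
    by apply: leq_trans jK _; rewrite leq_add2l.
have PGE n : P (G (N + n)%N) =
    ((\prod_(j < N) num theta q j (ext c j)) * (\prod_(j < N + n) pS theta q j)^-1)%:E.
  rewrite PG big_split /= prodfV; congr ((_ * _)%:E).
  elim: n => [|n IH]; first by rewrite addn0.
  by rewrite addnS big_ord_recr /= IH ext_ge ?leq_addr // num0 mulr1.
have cvg2 : (fun n => P (G (N + n)%N)) @ \oo -->
    ((\prod_(j < N) num theta q j (ext c j)) / heine_Z theta q)%:E.
  rewrite (_ : (fun n => _) = fun n => ((\prod_(j < N) num theta q j (ext c j)) *
     (\prod_(j < N + n) pS theta q j)^-1)%:E); last by apply/funext => n; rewrite PGE.
  apply: cvg_EFin; first exact: nearW.
  apply: cvgMl_tmp; apply: cvgV => //.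
  rewrite -(cvg_shiftn N) in Zc.
  by apply: cvg_trans Zc; apply: near_eq_cvg; apply: nearW => n /=; rewrite addnC.
exact: (cvg_unique _ cvgG cvg2).
Qed.

Lemma Hev_triv (T : Type) (m N : nat) (Y : nat -> T -> nat) (D : set {ffun 'I_N -> 'I_m.+1}) :
  trivIset D (Hev Y).
Proof.
move=> c c' _ _ [w [Hc Hc']]; apply/ffunP => i; apply: ord_inj.
by have := Hc (val i); rewrite Hc' /ext valK => <-.
Qed.

Lemma Hev_meas (d : measure_display) (T : measurableType d) (m N : nat) (Y : nat -> T -> nat)
  (c : {ffun 'I_N -> 'I_m.+1}) :
  (forall j, measurable_fun setT (Y j)) -> measurable (Hev Y c).
Proof.
move=> Ym; have -> : Hev Y c = \bigcap_j (Y j @^-1` [set ext c j]).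
  by apply/seteqP; split => w /=; [move=> H j _; exact: H | move=> H j; exact: H j I].
apply: bigcapT_measurable => j; rewrite -[X in measurable X]setTI; exact: Ym.
Qed.

Theorem mainTheorem1 (R : realType) (d : measure_display) (T : measurableType d)
  (P : probability T R) (m : nat) (theta q : 'I_m -> R)
  (Y : nat -> T -> nat) :
  (0 < m)%N ->
  (forall k, 0 < theta k) ->
  (forall k, 0 < q k < 1) ->
  (forall j, measurable_fun setT (Y j)) ->
  (forall j w, (Y j w <= m)%N) ->
  mutually_independent_nat P Y ->
  (forall j, P (Y j @^-1` [set 0%N]) =
     (1 / (1 + \sum_(l < m) theta l * q l ^+ j))%:E) ->
  (forall j (k : 'I_m), P (Y j @^-1` [set k.+1]) =
     (theta k * q k ^+ j / (1 + \sum_(l < m) theta l * q l ^+ j))%:E) ->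
  forall alpha : 'I_m -> nat,
    P [set w | forall k, Xcount (R:=R) Y k w = ((alpha k)%:R : R)%:E] =
    heine_pmf theta q alpha.
Proof.
move=> m0 th0 q01 Ymeas Ym Yind Y0 Yk alpha.
set E := [set w | _].
have [_ Z1] := @Z_cvg _ _ _ _ th0 q01.
have Z0 : heine_Z theta q != 0 by rewrite gt_eqF // (lt_le_trans ltr01).
pose EN N := E `&` [set w | forall j, (N <= j)%N -> Y j w = 0%N].
have PEN N : P (EN N) = ((\prod_(k < m) theta k ^+ alpha k)%:E * (W q N alpha)%:E
     * ((heine_Z theta q)^-1)%:E)%E.
  rewrite /EN EN_eq // measure_fin_bigcup //; first last.
  - by move=> c _; exact: Hev_meas.
  - exact: Hev_triv.
  - exact: finite_finset.
  have -> : [set c : {ffun 'I_N -> 'I_m.+1} | good alpha c] = [set` (good alpha : {pred _})].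
    by apply/seteqP; split => c; rewrite /= ?inE.
  rewrite -(@bigfs _ _ _ _ (index_enum _)); [|exact: index_enum_uniq|by move=> i _; rewrite mem_index_enum].
  transitivity (\sum_(c : {ffun 'I_N -> 'I_m.+1} | good alpha c)
     ((\prod_(j < N) num theta q j (ext c j)) / heine_Z theta q)%:E)%E.
    by apply: eq_bigr => c _; exact: (@PH _ _ _ _ _ _ _ _ th0 q01 Ymeas Ym Yind Y0 Yk).
  by rewrite sumEFin -mulr_suml sumnum -!EFinM.
have cvgE : (fun N => P (EN N)) @ \oo --> P E.
  have -> : E = \bigcup_N EN N by exact: (@E_eq R _ _ Y alpha Ym).
  apply: nondecreasing_cvg_mu.
  - move=> N; rewrite /EN EN_eq //; apply: fin_bigcup_measurable; [exact: finite_finset | move=> c _; exact: Hev_meas].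
  - apply: bigcupT_measurable => N; rewrite /EN EN_eq //; apply: fin_bigcup_measurable; [exact: finite_finset | move=> c _; exact: Hev_meas].
  - move=> N N' NN'; apply/subsetPset => w [Ew Zw]; split => // j Nj; apply: Zw.
    exact: leq_trans Nj.
have cvgH : (fun N => P (EN N)) @ \oo --> heine_pmf theta q alpha.
  rewrite (_ : (fun N => P (EN N)) = (fun N => ((\prod_(k < m) theta k ^+ alpha k)%:E * (W q N alpha)%:E
     * ((heine_Z theta q)^-1)%:E)%E)); last by apply/funext => N; rewrite PEN.
  rewrite /heine_pmf; apply: cvgeZr => //; apply: cvgeZl => //.
  exact: W_cvg.
exact: (cvg_unique _ cvgE cvgH).
Qed.
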